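(* Let $p$ be an odd prime and let $\mathcal T(\mathbf a)$, $\mathbf a=(a_1,\dots,a_k)$ with $k\ge 4$ and $\gcd(a_1,\dots,a_k)=1$, be a regular triangular form which is $p$-unstable. Then $\lambda_p(\mathcal T(\mathbf a))$ is also regular.
   Context: For positive integers $c_1,\dots,c_k$, $\mathcal T(c_1,\dots,c_k)=\sum c_i\,x_i(x_i+1)/2$. A nonnegative integer $n$ is represented if the equation $\mathcal T(\mathbf c)=n$ has a solution in $\mathbb Z^k$, and locally represented if it has a solution in $\mathbb Z_q^k$ for every prime $q$; the form is regular if it represents every positive integer it locally represents. For an odd prime $p$, $\overline{DQ_p(\mathbf c)}=\{\gamma\in\mathbb Z_p:\gamma=\sum c_iy_i^2,\ y_i\in\mathbb Z_p\}$, and $\mathcal T(\mathbf c)$ is $p$-unstable if $\overline{DQ_p(\mathbf c)}\ne\mathbb Z_p$. For primitive $\mathbf a=(a_1,\dots,a_k)$ and odd prime $p$, let $s_i=0$ if $p\mid a_i$ and $s_i=2$ otherwise, let $s=\min_i \mathrm{ord}_p(p^{s_i}a_i)\in\{1,2\}$, and define $\lambda_p(\mathcal T(\mathbf a))=\mathcal T(p^{s_1-s}a_1,\dots,p^{s_k-s}a_k)$. *)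

(* Defs.v *)
From mathcomp Require Import all_boot all_order all_algebra.
Set Implicit Arguments. Unset Strict Implicit. Unset Printing Implicit Defensive.
Import Order.TTheory GRing.Theory Num.Theory.
Local Open Scope ring_scope.

(* q-adic integers Z_q, realised as the inverse limit of Z/q^e Z:
   a coherent sequence of integer representatives, s (e+1) = s e mod q^e.
   Two such sequences denote the same q-adic integer iff they agree mod q^e
   for every e; equalities in Z_q are therefore stated level-wise. *)
Record padic (q : nat) := Padic {
  pseq : nat -> int;
  pseq_coh : forall e : nat, (pseq e.+1 = pseq e %[mod (q ^ e)%N%:Z])%Z }.

Definition tri (x : int) : int := ((x * (x + 1)) %/ 2)%Z.

Definition triform (k : nat) (c : 'I_k -> nat) (x : 'I_k -> int) : int :=
  \sum_(i < k) (c i)%:Z * tri (x i).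

Definition represented (k : nat) (c : 'I_k -> nat) (n : nat) : Prop :=
  exists x : 'I_k -> int, triform c x = n%:Z.

(* n is represented by T(c) over Z_q.  Since 2 is a non-zero-divisor in the
   domain Z_q, T(c)(x) = n in Z_q iff sum_i c_i x_i (x_i+1) = 2n in Z_q,
   which is stated level-wise modulo q^e. *)
Definition locally_represented_at (k : nat) (c : 'I_k -> nat) (n q : nat) : Prop :=
  exists x : 'I_k -> padic q, forall e : nat,
    (\sum_(i < k) (c i)%:Z * (pseq (x i) e * (pseq (x i) e + 1))
       = (2 * n)%N%:Z %[mod (q ^ e)%N%:Z])%Z.

Definition locally_represented (k : nat) (c : 'I_k -> nat) (n : nat) : Prop :=
  forall q : nat, prime q -> locally_represented_at c n q.

Definition regular (k : nat) (c : 'I_k -> nat) : Prop :=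
  forall n : nat, (0 < n)%N -> locally_represented c n -> represented c n.

Definition in_DQ (p k : nat) (c : 'I_k -> nat) (g : padic p) : Prop :=
  exists y : 'I_k -> padic p, forall e : nat,
    (pseq g e = \sum_(i < k) (c i)%:Z * (pseq (y i) e) ^+ 2 %[mod (p ^ e)%N%:Z])%Z.

Definition p_unstable (p k : nat) (c : 'I_k -> nat) : Prop :=
  exists g : padic p, ~ in_DQ c g.

Definition lam_s (p k : nat) (a : 'I_k -> nat) (i : 'I_k) : nat :=
  if (p %| a i)%N then 0%N else 2%N.

(* s = min_i ord_p(p^{s_i} a_i); the initial value 2 of the fold is harmless
   since ord_p(p^{s_i} a_i) = 2 whenever p does not divide a_i, and for
   primitive a (k >= 1) some a_i is prime to p. *)
Definition lam_smin (p k : nat) (a : 'I_k -> nat) : nat :=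
  \big[minn/2%N]_(i < k) logn p (p ^ lam_s p a i * a i).

Definition lambda_coef (p k : nat) (a : 'I_k -> nat) : 'I_k -> nat :=
  fun i => ((p ^ lam_s p a i * a i) %/ p ^ lam_smin p a)%N.

(* Main.v *)
Require Import Defs.
From mathcomp Require Import all_boot all_order all_algebra.
From mathcomp Require Import ring zify.
Import Order.TTheory GRing.Theory Num.Theory.
Open Scope ring_scope.

Definition Fq {k} (a : 'I_k -> nat) (z : 'I_k -> int) (j : 'I_k) (c : int) : int :=
  \sum_(i < k) (a i)%:Z * (c * z i + (i == j)%:R) ^+ 2.

Lemma sum_delta {k} (j : 'I_k) (f : 'I_k -> int) :
  \sum_(i < k) (i == j)%:R * f i = f j.
Proof.
rewrite (bigD1 j) //= eqxx mul1r big1 ?addr0 // => i /negbTE ->; by rewrite mul0r.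
Qed.

Lemma Fq_closed {k} (a : 'I_k -> nat) z j c :
  Fq a z j c = c ^+ 2 * (\sum_(i < k) (a i)%:Z * z i ^+ 2) + c * (2 * (a j)%:Z * z j) + (a j)%:Z.
Proof.
rewrite /Fq.
have -> : \sum_(i < k) (a i)%:Z * (c * z i + (i == j)%:R) ^+ 2 =
  \sum_(i < k) (c ^+ 2 * ((a i)%:Z * z i ^+ 2) + (i == j)%:R * ((a i)%:Z * (2 * c * z i + 1))).
  by apply: eq_bigr => i _; case: (i == j) => /=; ring.
rewrite big_split /= -mulr_sumr sum_delta.
ring.
Qed.

Fixpoint cseq (p : nat) (F : int -> int) (g : nat -> int) (d0 : int) (e : nat) : int :=
  match e with
  | 0 => 0
  | e'.+1 => let c := cseq p F g d0 e' in
     c + (p ^ e')%N%:Z * (((g e'.+1 - F c) %/ (p ^ e')%N%:Z)%Z * d0)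
  end.

Lemma cseq_ok (p : nat) (Q B A0 d0 : int) (g : nat -> int) :
  (0 < p)%N ->
  (p%:Z %| Q)%Z -> (p%:Z %| B * d0 - 1)%Z ->
  (forall e, ((p ^ e)%N%:Z %| g e.+1 - g e)%Z) ->
  let F := fun c => c ^+ 2 * Q + c * B + A0 in
  forall e, ((p ^ e)%N%:Z %| F (cseq p F g d0 e) - g e)%Z.
Proof.
move=> p0 pQ pB coh F; elim=> [|e IH] /=; first by rewrite expn0 dvd1z.
set m := (p ^ e)%N%:Z; set c := cseq p F g d0 e.
have mM : (m %| g e.+1 - F c)%Z.
  have -> : g e.+1 - F c = (g e.+1 - g e) - (F c - g e) by ring.
  by rewrite rpredB.
set M := g e.+1 - F c in mM *.
have hM := divzK mM; set mm := (M %/ m)%Z in hM *.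
have m0 : m != 0 by rewrite /m eqz_nat expn_eq0 negb_and -lt0n p0.
have -> : F (c + m * (mm * d0)) - g e.+1 =
   m * (mm * (B * d0 - 1) + 2 * c * Q * (mm * d0) + m * (mm * d0) ^+ 2 * Q).
  have -> : g e.+1 = F c + M by rewrite /M addrC subrK.
  rewrite /F -hM; ring.
rewrite expnS PoszM (mulrC p%:Z) -/m dvdz_mul2l //.
by rewrite !rpredD ?(dvdz_mull _ pB) ?(dvdz_mull _ pQ) // dvdz_mulr // dvdz_mull.
Qed.

Lemma modP (m x y : int) : (x = y %[mod m])%Z <-> (m %| x - y)%Z.
Proof. by rewrite -eqz_mod_dvd; split => [->|/eqP]. Qed.

Lemma not_dvd2 p : prime p -> odd p -> ~~ (p %| 2)%N.
Proof.
move=> pr op; apply/negP => /dvdn_leq => /(_ isT) h; have := prime_gt1 pr => h1.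
have p2 : p = 2%N by lia.
by rewrite p2 in op.
Qed.

Lemma aniso p k (a : 'I_k -> nat) : prime p -> odd p -> p_unstable p a ->
  forall z : 'I_k -> int, (p%:Z %| \sum_(i < k) (a i)%:Z * z i ^+ 2)%Z ->
  forall i, ~~ (p %| a i)%N -> (p%:Z %| z i)%Z.
Proof.
move=> pr op [g ng] z Hz j uj; apply/negPn/negP => nzj; apply: ng.
set Q := \sum_(i < k) _ in Hz.
set B := 2 * (a j)%:Z * z j.
have cop : coprimez p B.
  rewrite coprimezE /B !abszM /= prime_coprime // !Euclid_dvdM // negb_or.
  have n2 := not_dvd2 p pr op; rewrite unfold_in /dvdz /= in nzj; by rewrite (negbTE n2) (negbTE uj) (negbTE nzj).
have [[u d0] /= Hud] := coprimezP _ _ cop.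
have pB : (p%:Z %| B * d0 - 1)%Z.
  have -> : B * d0 - 1 = - (u * p%:Z) by rewrite -Hud; ring.
  by rewrite rpredN dvdz_mull.
set F := fun c : int => c ^+ 2 * Q + c * B + (a j)%:Z.
have hok := @cseq_ok p Q B (a j)%:Z d0 (pseq g) (prime_gt0 pr) Hz pB
  (fun e => (modP _ _ _).1 (pseq_coh g e)).
set cs := cseq p F (pseq g) d0.
have cohy : forall (i : 'I_k) e, (cs e.+1 * z i + (i == j)%:R = cs e * z i + (i == j)%:R %[mod (p ^ e)%N%:Z])%Z.
  move=> i e; apply/modP.
  have -> : cs e.+1 * z i + (i == j)%:R - (cs e * z i + (i == j)%:R) = (cs e.+1 - cs e) * z i by ring.
  apply: dvdz_mulr; rewrite /cs /=.
  by rewrite addrC addKr dvdz_mulr.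
exists (fun i => @Padic p (fun e => cs e * z i + (i == j)%:R) (cohy i)) => e /=.
apply/modP; rewrite -opprB rpredN.
have := hok e; rewrite /F -/cs.
suff -> : \sum_(i < k) (a i)%:Z * (cs e * z i + (i == j)%:R) ^+ 2 = F (cs e) by [].
by rewrite -[LHS]/(Fq a z j (cs e)) Fq_closed.
Qed.

Lemma tri2 (x : int) : 2 * tri x = x * (x + 1).
Proof.
rewrite /tri mulrC divzK //.
have := divz_eq x 2; set q := (x %/ 2)%Z; set r := (x %% 2)%Z => ->.
have r0 : 0 <= r by apply: modz_ge0.
have r2 : r < 2 by apply: ltz_pmod.
have [->|->] : r = 0 \/ r = 1 by lia.
  have -> : (q * 2 + 0) * (q * 2 + 0 + 1) = (q * (q * 2 + 1)) * 2 by ring.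
  by rewrite dvdz_mull.
have -> : (q * 2 + 1) * (q * 2 + 1 + 1) = (q * 2 + 1) * (q + 1) * 2 by ring.
by rewrite dvdz_mull.
Qed.

Lemma tri_form {k} (c : 'I_k -> nat) (x : 'I_k -> int) :
  2 * triform c x = \sum_(i < k) (c i)%:Z * (x i * (x i + 1)).
Proof.
rewrite /triform mulr_sumr; apply: eq_bigr => i _.
by rewrite -tri2; ring.
Qed.

Lemma keypt (pz hz Pz az bz X : int) (U : bool) : pz = 2 * hz + 1 ->
  Pz * bz = (if U then pz ^+ 2 * az else az) ->
  az * ((if U then pz * X + hz else X) * ((if U then pz * X + hz else X) + 1)) =
  Pz * (bz * (X * (X + 1))) + (if U then az * (hz * (hz + 1)) else 0).
Proof.
move=> -> hb; rewrite [Pz * (bz * _)]mulrA hb; clear hb; by case: U; ring.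
Qed.

Lemma keysum {k} (u : 'I_k -> bool) (pz hz Pz : int) (a b : 'I_k -> int) (X : 'I_k -> int) :
  pz = 2 * hz + 1 ->
  (forall i, Pz * b i = (if u i then pz ^+ 2 * a i else a i)) ->
  \sum_(i < k) a i * ((if u i then pz * X i + hz else X i) * ((if u i then pz * X i + hz else X i) + 1)) =
  Pz * \sum_(i < k) b i * (X i * (X i + 1)) + hz * (hz + 1) * \sum_(i < k) (if u i then a i else 0).
Proof.
move=> hp hb.
rewrite mulr_sumr mulr_sumr -big_split /=; apply: eq_bigr => i _.
rewrite (@keypt pz hz Pz (a i) (b i) (X i) (u i) hp (hb i)); case: (u i); ring.
Qed.

Lemma bigmin_le (I : eqType) (r : seq I) (x : nat) (F : I -> nat) j :
  j \in r -> (\big[minn/x]_(i <- r) F i <= F j)%N.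
Proof.
elim: r => [//|y r IH]; rewrite inE big_cons => /orP[/eqP ->|jr].
  exact: geq_minl.
exact: leq_trans (geq_minr _ _) (IH jr).
Qed.

Open Scope ring_scope.

Lemma main_thm (p k : nat) (a : 'I_k -> nat) :
  prime p -> odd p -> 
  (forall i, (0 < a i)%N) ->
  regular a -> p_unstable p a ->
  regular (lambda_coef p a).
Proof.
move=> pr op apos rega uns n n0 locb.
set s := lam_smin p a.
set b := lambda_coef p a.
set u := fun i => ~~ (p %| a i)%N.
have hdiv : forall i, (p ^ s %| p ^ lam_s p a i * a i)%N.
  move=> i; rewrite (pfactor_dvdn s pr); last by rewrite muln_gt0 expn_gt0 (prime_gt0 pr) apos.
  by rewrite /s /lam_smin bigmin_le // mem_index_enum.
have s1 : (0 < s)%N.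
  rewrite /s /lam_smin; apply: (big_ind (fun x => 0 < x)%N) => //.
    by move=> x y x0 y0; rewrite leq_min x0 y0.
  move=> i _; rewrite logn_gt0 mem_primes pr muln_gt0 expn_gt0 (prime_gt0 pr) apos /=.
  rewrite /lam_s; case: ifP => [pa|_]; first by rewrite expn0 mul1n.
  by rewrite dvdn_mulr // expnS dvdn_mulr.
set P : int := (p ^ s)%N%:Z.
have hb : forall i, P * (b i)%:Z = (if u i then p%:Z ^+ 2 * (a i)%:Z else (a i)%:Z).
  move=> i; rewrite /P -PoszM mulnC /b /lambda_coef divnK // /u /lam_s.
  case: (p %| a i)%N => /=; first by rewrite expn0 mul1n.
  by rewrite PoszM expnS expn1 PoszM expr2.
set h := p./2.
have hpn : p = (2 * h + 1)%N.
  by have := odd_double_half p; rewrite op -muln2 /h; lia.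
have hp : p%:Z = 2 * h%:Z + 1 by rewrite {1}hpn; lia.
set c0 := (h * (h + 1))./2.
have hc0 : (h * (h + 1) = 2 * c0)%N.
  have := odd_double_half (h * (h + 1)); rewrite oddM addn1 oddS andbN /= add0n.
  by rewrite -muln2 mulnC /c0 addn1 => ->.
set SUn := (\sum_(i < k) (if u i then a i else 0))%N.
set SU := \sum_(i < k) (if u i then (a i)%:Z else 0).
have hSU : SUn%:Z = SU.
  rewrite /SUn /SU (big_morph Posz PoszD (erefl _)); apply: eq_bigr => i _.
  by case: (u i).
set N := (p ^ s * n + c0 * SUn)%N.
have E2N : (2 * N)%N%:Z = P * (2 * n)%N%:Z + h%:Z * (h%:Z + 1) * SU.
  rewrite /N mulnDr !mulnA -hc0 -hSU /P; lia.
have locN : locally_represented a N.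
  move=> q pq; have [x Hx] := locb q pq.
  pose Yf i e := (if u i then p%:Z * pseq (x i) e + h%:Z else pseq (x i) e).
  have cohY : forall i e, (Yf i e.+1 = Yf i e %[mod (q ^ e)%N%:Z])%Z.
    move=> i e; apply/modP; have := (modP _ _ _).1 (pseq_coh (x i) e).
    rewrite /Yf; case: (u i) => // H.
    have -> : p%:Z * pseq (x i) e.+1 + h%:Z - (p%:Z * pseq (x i) e + h%:Z)
       = p%:Z * (pseq (x i) e.+1 - pseq (x i) e) by ring.
    exact: dvdz_mull.
  exists (fun i => @Padic q (Yf i) (cohY i)) => e /=.
  apply/modP; rewrite /Yf.
  rewrite (@keysum k u p%:Z h%:Z P (fun i => (a i)%:Z) (fun i => (b i)%:Z) (fun i => pseq (x i) e) hp hb).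
  rewrite E2N.
  have -> : forall A B C D : int, A * B + C * D - (A * (2 * n)%N%:Z + C * D) = A * (B - (2 * n)%N%:Z)
    by move=> A B C D; ring.
  by apply: dvdz_mull; apply/modP; exact: Hx.
have N0 : (0 < N)%N by rewrite /N addn_gt0 muln_gt0 expn_gt0 (prime_gt0 pr) n0.
have [y Hy] := rega N N0 locN.
have E : \sum_(i < k) (a i)%:Z * (y i * (y i + 1)) = P * (2 * n)%N%:Z + h%:Z * (h%:Z + 1) * SU.
  by rewrite -tri_form Hy -E2N PoszM.
have pP : (p%:Z %| P)%Z by rewrite /P dvdzE /= dvdn_exp.
have Hsum : (p%:Z %| \sum_(i < k) (a i)%:Z * (2 * y i + 1) ^+ 2)%Z.
  have -> : \sum_(i < k) (a i)%:Z * (2 * y i + 1) ^+ 2 =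
     4 * \sum_(i < k) (a i)%:Z * (y i * (y i + 1)) + SU +
     \sum_(i < k) (if u i then 0 else (a i)%:Z).
    rewrite mulr_sumr /SU -!big_split /=; apply: eq_bigr => i _.
    by case: (u i); ring.
  rewrite E.
  have -> : 4 * (P * (2 * n)%N%:Z + h%:Z * (h%:Z + 1) * SU) + SU
     = P * (4 * (2 * n)%N%:Z) + p%:Z * (p%:Z * SU) by rewrite hp; ring.
  rewrite !rpredD ?dvdz_mulr ?dvdz_mull //.
  apply: rpred_sum => i _; rewrite /u; case: ifP => //= /negbFE pa.
  by rewrite dvdzE.
have dz := @aniso p k a pr op uns _ Hsum.
pose x i := if u i then ((y i - h%:Z) %/ p%:Z)%Z else y i.
have hy : forall i, y i = (if u i then p%:Z * x i + h%:Z else x i).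
  move=> i; rewrite /x; case ui: (u i) => //.
  have d : (p%:Z %| y i - h%:Z)%Z.
    have -> : y i - h%:Z = (h%:Z + 1) * ((2 * y i + 1) - p%:Z) - p%:Z * (y i - h%:Z)
      by rewrite hp; ring.
    apply: rpredB; last exact: dvdz_mulr.
    by apply: dvdz_mull; apply: rpredB => //; apply: dz; rewrite /u -/(u i) ui.
  by rewrite mulrC divzK // subrK.
have E' := @keysum k u p%:Z h%:Z P (fun i => (a i)%:Z) (fun i => (b i)%:Z) x hp hb.
rewrite (eq_bigr (fun i => (a i)%:Z * (y i * (y i + 1)))) in E'; last first.
  by move=> i _; rewrite -hy.
have P0 : P != 0 by rewrite /P eqz_nat expn_eq0 negb_and -lt0n (prime_gt0 pr).
rewrite E in E'; move/addIr: E' => /(mulfI P0) E'.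
exists x; apply: (@mulfI _ 2) => //.
by rewrite tri_form -E' PoszM.
Qed.

Close Scope ring_scope.

Theorem proposition3p6 (p k : nat) (a : 'I_k -> nat) :
  prime p -> odd p -> (4 <= k)%N ->
  (forall i, (0 < a i)%N) ->
  (\big[gcdn/0%N]_(i < k) a i = 1%N) ->
  regular a -> p_unstable p a ->
  regular (lambda_coef p a).
Proof.
move=> pr op _ apos _; exact: main_thm.
Qed.
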